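(* Consider the planar system $$\frac{dN}{dt}=rN\left(1-\frac{N}{K}-\frac{h}{w+N}\right)-\frac{aNP}{b+N^2},\qquad \frac{dP}{dt}=\frac{cNP}{b+N^2}-\delta P,$$ where $r,K,h,w,a,b,c,\delta$ are positive constants with $w<K$. Let $D=c^2-4b\delta^2$, $N_4=\frac{c+\sqrt{D}}{2\delta}$, $N_5=\frac{c-\sqrt{D}}{2\delta}$, $N_6=\frac{c}{2\delta}$, and $$P(N)=\frac{r(b+N^2)\left[(K-w)N-K(h-w)-N^2\right]}{Ka(w+N)},$$ and set $E_i=(N_i,P(N_i))$, $i=4,5,6$. Suppose $P(N_4)>0$, $P(N_5)>0$ and $P(N_6)>0$ (for whichever of these are defined). For $i=4,5$ let $$T_i=\frac{hrN_i}{(w+N_i)^2}+\frac{2aP(N_i)N_i^2}{(b+N_i^2)^2}-\frac{rN_i}{K}$$ (the trace of the Jacobian of the system at $E_i$). (i) If $b=\left(\frac{c}{2\delta}\right)^2$, then the coexistence equilibrium point $E_6$ is non-hyperbolic. (ii) If $b<\left(\frac{c}{2\delta}\right)^2$, then the coexistence equilibrium point $E_4$ is unstable; moreover, if $T_4<0$ then $E_4$ is a saddle, and if $T_5<0$ then $E_5$ is locally asymptotically stable.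
   Context: $N(t)$ is the prey density and $P(t)$ the predator density. A coexistence equilibrium is an equilibrium with both coordinates positive. An equilibrium is non-hyperbolic if the Jacobian matrix of the system at it has an eigenvalue with zero real part. *)

(* Defs.v *)
From Stdlib Require Import Reals.
From Coquelicot Require Import Coquelicot.
Open Scope R_scope.

Definition fN (r K h w a b : R) (N P : R) : R :=
  r * N * (1 - N / K - h / (w + N)) - a * N * P / (b + N ^ 2).

Definition fP (b c delta : R) (N P : R) : R :=
  c * N * P / (b + N ^ 2) - delta * P.

Definition coexistence_equilibrium (r K h w a b c delta N P : R) : Prop :=
  0 < N /\ 0 < P /\ fN r K h w a b N P = 0 /\ fP b c delta N P = 0.

Definition J11 r K h w a b (N P : R) : R := Derive (fun x => fN r K h w a b x P) N.
Definition J12 r K h w a b (N P : R) : R := Derive (fun y => fN r K h w a b N y) P.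
Definition J21 b c delta (N P : R) : R := Derive (fun x => fP b c delta x P) N.
Definition J22 b c delta (N P : R) : R := Derive (fun y => fP b c delta N y) P.

Definition eigenvalue2 (m11 m12 m21 m22 : R) (lam : C) : Prop :=
  Cminus (Cmult (Cminus (RtoC m11) lam) (Cminus (RtoC m22) lam))
         (RtoC (m12 * m21)) = RtoC 0.

Definition jac_eigenvalue (r K h w a b c delta N P : R) (lam : C) : Prop :=
  eigenvalue2 (J11 r K h w a b N P) (J12 r K h w a b N P)
              (J21 b c delta N P) (J22 b c delta N P) lam.

Definition non_hyperbolic r K h w a b c delta N P : Prop :=
  exists lam, jac_eigenvalue r K h w a b c delta N P lam /\ Re lam = 0.

Definition unstable_eq r K h w a b c delta N P : Prop :=
  exists lam, jac_eigenvalue r K h w a b c delta N P lam /\ 0 < Re lam.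

Definition saddle_eq r K h w a b c delta N P : Prop :=
  exists l1 l2 : R, jac_eigenvalue r K h w a b c delta N P (RtoC l1) /\
                    jac_eigenvalue r K h w a b c delta N P (RtoC l2) /\
                    l1 < 0 < l2.

Definition las_eq r K h w a b c delta N P : Prop :=
  forall lam, jac_eigenvalue r K h w a b c delta N P lam -> Re lam < 0.

(* The curve P(N) (prey nullcline). *)
Definition Pcurve (r K h w a b : R) (N : R) : R :=
  r * (b + N ^ 2) * ((K - w) * N - K * (h - w) - N ^ 2) / (K * a * (w + N)).

Definition Dd (b c delta : R) : R := c ^ 2 - 4 * b * delta ^ 2.
Definition N4 (b c delta : R) : R := (c + sqrt (Dd b c delta)) / (2 * delta).
Definition N5 (b c delta : R) : R := (c - sqrt (Dd b c delta)) / (2 * delta).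
Definition N6 (c delta : R) : R := c / (2 * delta).

Definition Ttr (r K h w a b : R) (Ni : R) : R :=
  h * r * Ni / (w + Ni) ^ 2
  + 2 * a * Pcurve r K h w a b Ni * Ni ^ 2 / (b + Ni ^ 2) ^ 2
  - r * Ni / K.

(* Main.v *)
Require Import Defs.
From Stdlib Require Import Reals.
From Coquelicot Require Import Coquelicot.
Open Scope R_scope.
From Stdlib Require Import Lra Psatz.

Lemma eig_iff m11 m12 m21 x y :
  eigenvalue2 m11 m12 m21 0 (x,y) <->
  (x^2 - y^2 - m11 * x - m12*m21 = 0 /\ 2*x*y - m11*y = 0).
Proof.
  unfold eigenvalue2, Cminus, Cmult, RtoC, Cplus, Copp; simpl.
  split.
  - intro H. injection H as H1 H2. split; nra.
  - intros [H1 H2]. f_equal; nra.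
Qed.

Lemma J11_val r K h w a b N P : 0 < N -> 0 < K -> 0 < w -> 0 < b ->
  J11 r K h w a b N P = r*(1 - N/K - h/(w+N)) + r*N*(-1/K + h/(w+N)^2) - a*P*(b - N^2)/(b+N^2)^2.
Proof.
  intros. unfold J11, fN. apply is_derive_unique. auto_derive.
  - repeat split; nra.
  - field; repeat split; nra.
Qed.

Lemma J12_val r K h w a b N P : 0 < N -> 0 < b ->
  J12 r K h w a b N P = - a*N/(b+N^2).
Proof.
  intros. unfold J12, fN. apply is_derive_unique. auto_derive.
  - repeat split; nra.
  - field; nra.
Qed.

Lemma J21_val b c d N P : 0 < N -> 0 < b ->
  J21 b c d N P = c*P*(b-N^2)/(b+N^2)^2.
Proof.
  intros. unfold J21, fP. apply is_derive_unique. auto_derive.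
  - repeat split; nra.
  - field; nra.
Qed.

Lemma J22_val b c d N P : 0 < N -> 0 < b ->
  J22 b c d N P = c*N/(b+N^2) - d.
Proof.
  intros. unfold J22, fP. apply is_derive_unique. auto_derive.
  - repeat split; nra.
  - field; nra.
Qed.

Lemma gen r K h w a b c d N P : 0 < r -> 0 < K -> 0 < w -> 0 < a -> 0 < b -> 0 < d ->
  0 < N -> 0 < P -> d*N^2 - c*N + d*b = 0 -> P = Pcurve r K h w a b N ->
  coexistence_equilibrium r K h w a b c d N P /\
  J11 r K h w a b N P = Ttr r K h w a b N /\ J22 b c d N P = 0 /\
  J12 r K h w a b N P * J21 b c d N P = a*c*N*P*(N^2-b)/(b+N^2)^3.
Proof.
  intros. assert (Hc : c*N/(b+N^2) = d) by (field_simplify_eq; nra).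
  assert (He : r*(1 - N/K - h/(w+N)) = a*P/(b+N^2)).
  { subst P. unfold Pcurve. field. repeat split; nra. }
  split; [|split; [|split]].
  - unfold coexistence_equilibrium, fN, fP. repeat split; auto.
    + replace (a * N * P / (b + N ^ 2)) with (N * (a*P/(b+N^2))) by (field; nra).
      rewrite <- He. ring.
    + replace (c * N * P / (b + N ^ 2)) with (P * (c*N/(b+N^2))) by (field; nra).
      rewrite Hc. ring.
  - rewrite J11_val by auto. rewrite He. unfold Ttr. rewrite <- H8. field. nra.
  - rewrite J22_val by auto. lra.
  - rewrite J12_val, J21_val by auto. field. nra.
Qed.

Lemma las_l T m12 m21 l : T < 0 -> m12*m21 < 0 -> eigenvalue2 T m12 m21 0 l -> Re l < 0.
Proof.
  destruct l as [x y]. rewrite eig_iff. simpl. intros HT Hq [H1 H2].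
  destruct (Req_dec y 0) as [Hy|Hy].
  - subst y. nra.
  - assert (x = T/2). { apply Rmult_eq_reg_r with y; auto. nra. } lra.
Qed.

Lemma roots T m12 m21 : 0 < m12*m21 -> exists l1 l2,
  eigenvalue2 T m12 m21 0 (RtoC l1) /\ eigenvalue2 T m12 m21 0 (RtoC l2) /\ l1 < 0 < l2.
Proof.
  intros Hq. set (s := sqrt (T^2 + 4*(m12*m21))).
  assert (Hs2 : s*s = T^2 + 4*(m12*m21)) by (apply sqrt_sqrt; nra).
  assert (Hs0 : 0 <= s) by apply sqrt_pos.
  assert (HsT : T < s /\ -T < s) by (split; nra).
  exists ((T - s)/2), ((T+s)/2). unfold RtoC. rewrite !eig_iff.
  repeat split; try nra; lra.
Qed.

Lemma sqrt_facts b c d : 0 < b -> 0 < c -> 0 < d -> b < (c/(2*d))^2 ->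
  let s := sqrt (Dd b c d) in 0 < s /\ s < c /\ s*s = c^2 - 4*b*d^2.
Proof.
  intros. cbv zeta. unfold Dd.
  assert (HD : 0 < c^2 - 4*b*d^2).
  { replace ((c/(2*d))^2) with (c^2/(4*d^2)) in H2 by (field; lra).
    apply Rmult_lt_compat_r with (r := 4*d^2) in H2; [|nra].
    unfold Rdiv in H2. rewrite Rmult_assoc, Rinv_l in H2 by nra. lra. }
  assert (Hs2 := sqrt_sqrt _ (Rlt_le _ _ HD)).
  assert (Hp := sqrt_lt_R0 _ HD).
  unfold s, Dd. set (q := sqrt (c ^ 2 - 4 * b * d ^ 2)) in *.
  split; [|split]; auto.
  assert (0 < 4*b*d^2) by (apply Rmult_lt_0_compat; [lra| apply pow_lt; lra]).
  assert ((c - q)*(c+q) > 0) by (ring_simplify; lra). nra.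
Qed.

Theorem theorem7 (r K h w a b c delta : R)
  (hr : 0 < r) (hK : 0 < K) (hh : 0 < h) (hw : 0 < w) (ha : 0 < a)
  (hb : 0 < b) (hc : 0 < c) (hd : 0 < delta) (hwK : w < K)
  (hP4 : 0 < Pcurve r K h w a b (N4 b c delta))
  (hP5 : 0 < Pcurve r K h w a b (N5 b c delta))
  (hP6 : 0 < Pcurve r K h w a b (N6 c delta)) :
  (b = (c / (2 * delta)) ^ 2 ->
     let E6N := N6 c delta in let E6P := Pcurve r K h w a b E6N in
     coexistence_equilibrium r K h w a b c delta E6N E6P /\
     non_hyperbolic r K h w a b c delta E6N E6P)
  /\
  (b < (c / (2 * delta)) ^ 2 ->
     let E4N := N4 b c delta in let E4P := Pcurve r K h w a b E4N in
     let E5N := N5 b c delta in let E5P := Pcurve r K h w a b E5N in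
     coexistence_equilibrium r K h w a b c delta E4N E4P /\
     unstable_eq r K h w a b c delta E4N E4P /\
     (Ttr r K h w a b E4N < 0 -> saddle_eq r K h w a b c delta E4N E4P) /\
     (Ttr r K h w a b E5N < 0 ->
        coexistence_equilibrium r K h w a b c delta E5N E5P /\
        las_eq r K h w a b c delta E5N E5P)).
Proof.
  split.
  - intros Hb E6N E6P.
    assert (HN : 0 < E6N) by (unfold E6N, N6; apply Rdiv_lt_0_compat; lra).
    assert (H2 : 2*delta*E6N = c) by (unfold E6N, N6; field; lra).
    assert (HbN : b = E6N^2) by (rewrite Hb; unfold E6N, N6; reflexivity).
    destruct (gen r K h w a b c delta E6N E6P) as [Hco [H11 [H22 Hq]]]; auto.
    + rewrite HbN. nra.
    split; auto.
    exists (0,0). unfold jac_eigenvalue. rewrite H22, eig_iff, Hq.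
    replace (E6N^2 - b) with 0 by lra. split; [split; [field; nra | ring] | reflexivity].
  - intros Hb E4N E4P E5N E5P.
    destruct (sqrt_facts b c delta hb hc hd Hb) as [Hs0 [Hsc Hs2]].
    assert (E4e : E4N = (c + sqrt (Dd b c delta))/(2*delta)) by reflexivity.
    assert (E5e : E5N = (c - sqrt (Dd b c delta))/(2*delta)) by reflexivity.
    set (s := sqrt (Dd b c delta)) in *.
    assert (H4 : 0 < E4N) by (rewrite E4e; apply Rdiv_lt_0_compat; lra).
    assert (H5 : 0 < E5N) by (rewrite E5e; apply Rdiv_lt_0_compat; lra).
    assert (R4 : delta*E4N^2 - c*E4N + delta*b = 0).
    { rewrite E4e. replace (delta * ((c + s) / (2 * delta)) ^ 2 - c * ((c + s) / (2 * delta)) + delta * b)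
        with ((s*s - c^2 + 4*b*delta^2)/(4*delta)) by (field; lra). rewrite Hs2. field; lra. }
    assert (R5 : delta*E5N^2 - c*E5N + delta*b = 0).
    { rewrite E5e. replace (delta * ((c - s) / (2 * delta)) ^ 2 - c * ((c - s) / (2 * delta)) + delta * b)
        with ((s*s - c^2 + 4*b*delta^2)/(4*delta)) by (field; lra). rewrite Hs2. field; lra. }
    assert (S4 : E4N^2 - b > 0).
    { assert (b = (c^2 - s*s)/(4*delta^2)) by (rewrite Hs2; field; lra).
      rewrite H, E4e. field_simplify; [|lra]. apply Rdiv_lt_0_compat; nra. }
    assert (S5 : E5N^2 - b < 0).
    { assert (b = (c^2 - s*s)/(4*delta^2)) by (rewrite Hs2; field; lra).
      rewrite H, E5e. replace (((c - s) / (2 * delta)) ^ 2 - (c ^ 2 - s * s) / (4 * delta ^ 2))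
        with (- ((2*s*(c - s)) / (4*delta^2))) by (field; lra).
      apply Ropp_lt_gt_0_contravar. apply Rdiv_lt_0_compat; nra. }
    assert (P4 : 0 < E4P) by exact hP4. assert (P5 : 0 < E5P) by exact hP5.
    destruct (gen r K h w a b c delta E4N E4P) as [Hco4 [H11 [H22 Hq4]]]; auto.
    destruct (gen r K h w a b c delta E5N E5P) as [Hco5 [H11' [H22' Hq5]]]; auto.
    assert (Q4 : 0 < J12 r K h w a b E4N E4P * J21 b c delta E4N E4P).
    { rewrite Hq4. apply Rdiv_lt_0_compat; [|apply pow_lt; nra]. 
      apply Rmult_lt_0_compat; [apply Rmult_lt_0_compat; [apply Rmult_lt_0_compat; [apply Rmult_lt_0_compat|]|]|]; lra. }
    assert (Q5 : J12 r K h w a b E5N E5P * J21 b c delta E5N E5P < 0).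
    { rewrite Hq5. unfold Rdiv. apply Rmult_neg_pos; [|apply Rinv_0_lt_compat, pow_lt; nra].
      apply Rmult_pos_neg; [|lra]. apply Rmult_lt_0_compat; [apply Rmult_lt_0_compat; [apply Rmult_lt_0_compat|]|]; lra. }
    destruct (roots (J11 r K h w a b E4N E4P) _ _ Q4) as [l1 [l2 [Hl1 [Hl2 Hl]]]].
    split; [auto|split; [|split]].
    + exists (RtoC l2). unfold jac_eigenvalue. rewrite H22. split; auto. simpl. lra.
    + intros _. exists l1, l2. unfold jac_eigenvalue. rewrite H22. auto.
    + intros HT. split; auto. intros l. unfold jac_eigenvalue. rewrite H22'.
      intro Hl'. apply (las_l _ _ _ l) in Hl'; auto. rewrite H11'. auto.
Qed.
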